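(* Let $N\ge3$ be odd. Define $v_0=1$, $v_1=1/2$ and, for $0<k<N-1$, $$v_{k+1}=\frac{\tfrac12(N^2-1)v_k+k(N^2-2k^2-3k-2)v_k-k(N^2-k^2)v_{k-1}}{(k+1)\big(N^2-(k+1)^2\big)}.$$ Then $\vec v=(v_0,\dots,v_{N-1})$ is an eigenvector, with rational entries, of the $N\times N$ matrix $J_N$ (symmetric tridiagonal with $(J_N)_{kk}=k(2k^2+3k+2-N^2)$, $(J_N)_{k,k+1}=(J_N)_{k+1,k}=(k+1)(N^2-(k+1)^2)$) with eigenvalue $(N^2-1)/2$, and hence also an eigenvector of the Pascal matrix $(T_N)_{jk}=\binom{j+k}{j}$ with eigenvalue $1$; every eigenvector of $J_N$ with eigenvalue $(N^2-1)/2$ is a scalar multiple of $\vec v$.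
   Context: Matrix indices start at $0$. *)

(* Defs.v *)
From HB Require Import structures.
From mathcomp Require Import all_boot all_order all_algebra.
Set Implicit Arguments. Unset Strict Implicit. Unset Printing Implicit Defensive.
Import Order.TTheory GRing.Theory Num.Theory.
Local Open Scope ring_scope.

Fixpoint vpair (N : nat) (k : nat) : rat * rat :=
  match k with
  | 0%N => (1, 1 / 2)
  | k'.+1 =>
      let: (a, b) := vpair N k' in
      (* a = v_{k'}, b = v_{k'+1}; k := k'+1 *)
      let kk : rat := k%:R in
      let n2 : rat := (N%:R) ^+ 2 in
      (b, ((n2 - 1) / 2 * b + kk * (n2 - 2 * kk ^+ 2 - 3 * kk - 2) * b
            - kk * (n2 - kk ^+ 2) * a)
           / ((kk + 1) * (n2 - (kk + 1) ^+ 2)))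
  end.

Definition vseq (N k : nat) : rat := (vpair N k).1.

Definition vvec (N : nat) : 'cV[rat]_N := \col_(k < N) vseq N k.

Definition Jdiag (N k : nat) : int := (k%:Z * (2 * k%:Z ^+ 2 + 3 * k%:Z + 2 - N%:Z ^+ 2))%R.
Definition Joff (N k : nat) : int := (k%:Z * (N%:Z ^+ 2 - k%:Z ^+ 2))%R.

Definition Jmat (R : pzRingType) (N : nat) : 'M[R]_N :=
  \matrix_(i < N, j < N)
    if i == j :> nat then (Jdiag N i)%:~R
    else if j == i.+1 :> nat then (Joff N j)%:~R
    else if i == j.+1 :> nat then (Joff N i)%:~R
    else 0.

Definition Tmat (R : pzRingType) (N : nat) : 'M[R]_N :=
  \matrix_(j < N, k < N) ('C(j + k, j))%:R.

Definition lamN (R : fieldType) (N : nat) : R := ((N%:R) ^+ 2 - 1) / 2.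

(* Main.v *)
Require Import Defs.
From HB Require Import structures.
From mathcomp Require Import all_boot all_order all_algebra.
Import Order.TTheory GRing.Theory Num.Theory.
Local Open Scope ring_scope.
From mathcomp Require Import ring lra zify.

Module Aux.
Set Implicit Arguments. Unset Strict Implicit. Unset Printing Implicit Defensive.

Definition Tri (R : pzRingType) (N : nat) (d o : nat -> R) : 'M[R]_N :=
  \matrix_(i < N, j < N)
    if i == j :> nat then d i
    else if j == i.+1 :> nat then o j
    else if i == j.+1 :> nat then o i
    else 0.

Lemma JTri (R : pzRingType) N : Jmat R N = Tri N (fun k => (Jdiag N k)%:~R) (fun k => (Joff N k)%:~R).
Proof. by []. Qed.

Lemma sum_if_eq (R : pzRingType) m k (h : nat -> R) :
  \sum_(l < m) (if (l:nat) == k then h l else 0) = if (k < m)%N then h k else 0.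
Proof.
case: ltnP => hk.
  rewrite (bigD1 (Ordinal hk)) //= eqxx big1 ?addr0 // => l hl.
  rewrite ifF //; apply: contraNF hl => /eqP e; apply/eqP; exact: val_inj.
rewrite big1 // => l _; rewrite ifF //; apply/negbTE.
by rewrite neq_ltn (leq_trans (ltn_ord l) hk).
Qed.

Lemma tri_row (R : pzRingType) N (d o : nat -> R) (ho0 : o 0%N = 0) (hoN : o N = 0)
  (g : nat -> R) (i : 'I_N) :
  \sum_(l < N) Tri N d o i l * g l = o i * g i.-1 + d i * g i + o i.+1 * g i.+1.
Proof.
rewrite (eq_bigr (fun l : 'I_N => (if (l:nat) == i then d i * g l else 0)
   + (if (l:nat) == i.+1 then o l * g l else 0)
   + (if (l:nat) == i.-1 then (if (0 < i)%N then o i * g l else 0) else 0))); last first.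
  { move=> l _; rewrite mxE.
  move: (nat_of_ord l) (nat_of_ord i) => a b.
  repeat (case: eqP => ? /=); subst; rewrite ?mul0r ?addr0 ?add0r //; try lia.
  all: case: posnP => /= ?; rewrite ?mul0r ?addr0 ?add0r //; try lia.
  }
rewrite !big_split /=.
rewrite (sum_if_eq _ _ (fun l => d i * g l)) (sum_if_eq _ _ (fun l => o l * g l))
  (sum_if_eq _ _ (fun l => if (0 < i)%N then o i * g l else 0)) ltn_ord (leq_ltn_trans (leq_pred i) (ltn_ord i)).
case: ltnP => h1.
  by case: (posnP i) => [->|hi]; rewrite ?ho0 ?mul0r ?addr0 ?add0r // [LHS]addrC addrA.
have ei : i.+1 = N by have := ltn_ord i; lia.
rewrite ei hoN mul0r !addr0.
by case: (posnP i) => [->|hi]; rewrite ?ho0 ?mul0r ?addr0 ?add0r // addrC.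
Qed.

Lemma Tri_sym (R : pzRingType) N (d o : nat -> R) (i j : 'I_N) : Tri N d o i j = Tri N d o j i.
Proof.
rewrite !mxE; move: (nat_of_ord i) (nat_of_ord j) => a b.
by repeat (case: eqP => ? /=); subst => //; lia.
Qed.

Lemma tri_col (R : comPzRingType) N (d o : nat -> R) (ho0 : o 0%N = 0) (hoN : o N = 0)
  (g : nat -> R) (j : 'I_N) :
  \sum_(l < N) g l * Tri N d o l j = g j.-1 * o j + g j * d j + g j.+1 * o j.+1.
Proof.
rewrite (eq_bigr (fun l : 'I_N => Tri N d o j l * g l)); last by move=> l _; rewrite Tri_sym mulrC.
by rewrite tri_row // ![g _ * _]mulrC.
Qed.

Lemma Jdiag_R (R : pzRingType) N k : (Jdiag N k)%:~R = k%:R * (2 * k%:R^+2 + 3 * k%:R + 2 - N%:R^+2) :> R.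
Proof. by rewrite /Jdiag !expr2 !(intrM, intrD, intrB, intrN, mulrz_nat) -!pmulrn. Qed.

Lemma Joff_R (R : pzRingType) N k : (Joff N k)%:~R = k%:R * (N%:R^+2 - k%:R^+2) :> R.
Proof. by rewrite /Joff !expr2 !(intrM, intrD, intrB, intrN, mulrz_nat) -!pmulrn. Qed.

Lemma vpairE N k : vpair N k = (vseq N k, vseq N k.+1).
Proof. by rewrite /vseq /=; case: (vpair N k). Qed.

Lemma vseq0 N : vseq N 0 = 1. Proof. by []. Qed.
Lemma vseq1 N : vseq N 1 = 1/2. Proof. by []. Qed.

Lemma vseqSS N k : vseq N k.+2 =
  let kk : rat := k.+1%:R in
  let n2 : rat := (N%:R) ^+ 2 in
  ((n2 - 1) / 2 * vseq N k.+1 + kk * (n2 - 2 * kk ^+ 2 - 3 * kk - 2) * vseq N k.+1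
            - kk * (n2 - kk ^+ 2) * vseq N k)
           / ((kk + 1) * (n2 - (kk + 1) ^+ 2)).
Proof. by rewrite {1}/vseq /= vpairE. Qed.

Lemma sq_neq0 (R : numFieldType) (N k : nat) : (k < N)%N -> (N%:R ^+ 2 - k%:R ^+ 2 : R) != 0.
Proof.
move=> h; rewrite subr_sqr mulf_neq0 //.
  by rewrite subr_eq0 eqr_nat; apply/eqP; lia.
by rewrite -natrD pnatr_eq0; apply/eqP; lia.
Qed.

Lemma vrec (R : numFieldType) N k : (k.+1 < N)%N ->
  (Joff N k.+1)%:~R * ratr (vseq N k.+1) =
    lamN R N * ratr (vseq N k) - (Jdiag N k)%:~R * ratr (vseq N k) - (Joff N k)%:~R * ratr (vseq N k.-1) :> R.
Proof.
move=> hk; rewrite !Joff_R Jdiag_R /lamN.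
have hD := sq_neq0 R hk.
case: k hk hD => [|k] hk hD.
  rewrite vseq1 vseq0 /= !(mul0r, subr0, rmorph1, fmorph_div, rmorph_nat).
  have h2 : (2 : R) != 0 by rewrite pnatr_eq0.
  by field.
rewrite vseqSS /= !(fmorph_div, rmorphD, rmorphB, rmorphM, rmorph_nat, rmorphXn, rmorph1, rmorphN).
have h2 : (2 : R) != 0 by rewrite pnatr_eq0.
have hk2 : (k.+2%:R : R) != 0 by rewrite pnatr_eq0.
rewrite natr1.
field.
have e : (2 + k%:R : R) = k.+2%:R by rewrite -[k.+2]addn2 natrD addrC.
by rewrite e -!expr2 hD hk2.
Qed.

Definition nf (R : pzRingType) N (w : 'cV[R]_N) (k : nat) : R :=
  oapp (fun i : 'I_N => w i 0) 0 (insub k).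

Lemma nfE (R : pzRingType) N (w : 'cV[R]_N) (i : 'I_N) : nf w i = w i 0.
Proof. by rewrite /nf valK. Qed.

Lemma Joff0 (R : pzRingType) N : (Joff N 0)%:~R = 0 :> R.
Proof. by rewrite Joff_R mul0r. Qed.
Lemma JoffN (R : pzRingType) N : (Joff N N)%:~R = 0 :> R.
Proof. by rewrite Joff_R subrr mulr0. Qed.
Lemma Jdiag0 (R : pzRingType) N : (Jdiag N 0)%:~R = 0 :> R.
Proof. by rewrite Jdiag_R mul0r. Qed.

Lemma Joff_neq0 (R : numFieldType) N k : (0 < k < N)%N -> (Joff N k)%:~R != 0 :> R.
Proof.
move=> /andP[h0 h1]; rewrite Joff_R mulf_neq0 ?sq_neq0 //.
by rewrite pnatr_eq0 -lt0n.
Qed.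

Lemma Jmul_row (R : pzRingType) N m (A : 'M[R]_(N, m)) (i : 'I_N) (j : 'I_m) (g : nat -> R) :
  (forall l : 'I_N, A l j = g l) ->
  (Jmat R N *m A) i j = (Joff N i)%:~R * g i.-1 + (Jdiag N i)%:~R * g i + (Joff N i.+1)%:~R * g i.+1.
Proof.
move=> hA; rewrite mxE (eq_bigr (fun l : 'I_N => Jmat R N i l * g l)) => [|l _]; last by rewrite hA.
by rewrite JTri tri_row // ?Joff0 ?JoffN.
Qed.

Lemma Jmul_col (R : comPzRingType) N m (A : 'M[R]_(m, N)) (i : 'I_m) (j : 'I_N) (g : nat -> R) :
  (forall l : 'I_N, A i l = g l) ->
  (A *m Jmat R N) i j = g j.-1 * (Joff N j)%:~R + g j * (Jdiag N j)%:~R + g j.+1 * (Joff N j.+1)%:~R.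
Proof.
move=> hA; rewrite mxE (eq_bigr (fun l : 'I_N => g l * Jmat R N l j)) => [|l _]; last by rewrite hA.
by rewrite JTri tri_col // ?Joff0 ?JoffN.
Qed.

Lemma Jeq (R : fieldType) N (w : 'cV[R]_N) (hw : Jmat R N *m w = lamN R N *: w) k : (k < N)%N ->
  (Joff N k)%:~R * nf w k.-1 + (Jdiag N k)%:~R * nf w k + (Joff N k.+1)%:~R * nf w k.+1 = lamN R N * nf w k.
Proof.
move=> hk.
have := congr1 (fun M : 'cV[R]_N => M (Ordinal hk) 0) hw => /=.
by rewrite (Jmul_row _ _ (g := nf w)) ?mxE ?nfE // => l; rewrite nfE.
Qed.

Lemma uniq_eig (R : numFieldType) N (w : 'cV[R]_N) (hw : Jmat R N *m w = lamN R N *: w) k :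
  (k < N)%N -> nf w k = nf w 0 * ratr (vseq N k).
Proof.
suff H : forall k, (k.+1 < N)%N -> nf w k = nf w 0 * ratr (vseq N k) /\ nf w k.+1 = nf w 0 * ratr (vseq N k.+1).
  case: k => [|k] hk; first by rewrite vseq0 rmorph1 mulr1.
  exact: (H k hk).2.
clear k; elim=> [|k IH] hk.
  split; first by rewrite vseq0 rmorph1 mulr1.
  have E := Jeq hw (ltnW hk).
  rewrite Joff0 Jdiag0 !mul0r !add0r /= in E.
  have V := vrec R (k:=0) hk.
  rewrite Jdiag0 Joff0 !mul0r !subr0 vseq0 rmorph1 mulr1 in V.
  apply: (mulfI (Joff_neq0 R (N:=N) (k:=1) _)); first by apply/andP; split=> //; lia.
  by rewrite E mulrCA V mulrC.
have [IH1 IH2] := IH (ltnW hk).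
split=> //.
have E := Jeq hw (k := k.+1) (ltnW hk).
have V := vrec R hk.
apply: (mulfI (Joff_neq0 R (N:=N) (k:=k.+2) _)); first by apply/andP; split=> //; lia.
have E1 : (Joff N k.+2)%:~R * nf w k.+2 = lamN R N * nf w k.+1 - (Jdiag N k.+1)%:~R * nf w k.+1 - (Joff N k.+1)%:~R * nf w k.
  by rewrite -E /=; ring.
by rewrite E1 mulrCA V IH1 IH2 /=; ring.
Qed.

Lemma BI (R : numFieldType) N i j :
  (Joff N i)%:~R * ('C(i.-1, j))%:R + (Jdiag N i)%:~R * ('C(i, j))%:R + (Joff N i.+1)%:~R * ('C(i.+1, j))%:R
  = ('C(i, j.-1))%:R * (Joff N j)%:~R + ('C(i, j))%:R * (N%:R ^+ 2 - 1 - (Jdiag N j)%:~R)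
    + ('C(i, j.+1))%:R * (Joff N j.+1)%:~R :> R.
Proof.
case: (ltnP i.+1 j) => h.
  rewrite !(@bin_small i.-1) ?(@bin_small i) ?(@bin_small i.+1) //; try lia.
  by rewrite !mulr0 !mul0r !addr0.
case: (j =P i.+1) => [->|hne].
  rewrite !(@bin_small i.-1) ?(@bin_small i (i.+1)) ?(@bin_small i (i.+2)) ?binn //=; try lia.
  by rewrite !(mulr0, mul0r, mulr1, mul1r, addr0, add0r).
have hji : (j <= i)%N by lia.
case: i h hne hji => [|i] h hne hji.
  have -> : j = 0%N by lia.
  rewrite !bin0 bin0n /= !Joff_R !Jdiag_R /=; ring.
set a : R := ('C(i.+1, j))%:R.
have F1 : ('C(i, j))%:R = (i.+1%:R - j%:R) * a / i.+1%:R :> R.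
  have := mul_bin_down i.+1 j => /(congr1 (fun x => x%:R : R)).
  rewrite !natrM natrB // => E.
  by rewrite -E mulrC mulKf // pnatr_eq0.
have F2 : ('C(i.+2, j))%:R = i.+2%:R * a / (i.+2%:R - j%:R) :> R.
  have := mul_bin_down i.+2 j => /(congr1 (fun x => x%:R : R)).
  rewrite !natrM natrB /=; last by lia.
  move=> E; rewrite /a E mulrC mulKf //.
  by rewrite subr_eq0 eqr_nat; apply/eqP; lia.
have F4 : ('C(i.+1, j.+1))%:R = (i.+1%:R - j%:R) * a / j.+1%:R :> R.
  have := mul_bin_left i.+1 j => /(congr1 (fun x => x%:R : R)).
  rewrite !natrM natrB // => E.
  by rewrite -E mulrC mulKf // pnatr_eq0.
have F3 : ('C(i.+1, j.-1))%:R * (Joff N j)%:~R = a * j%:R / (i.+2%:R - j%:R) * (Joff N j)%:~R :> R.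
  case: (posnP j) => [j0|jp]; first by rewrite j0 Joff0 !mulr0.
  congr (_ * _).
  have := mul_bin_left i.+1 j.-1; rewrite prednK // => /(congr1 (fun x => x%:R : R)).
  have -> : (i.+1 - j.-1 = i.+2 - j)%N by lia.
  rewrite !natrM natrB /=; last by lia.
  have hz : (i.+2%:R - j%:R : R) != 0 by rewrite subr_eq0 eqr_nat; apply/eqP; lia.
  move=> E; apply: (mulfI hz); rewrite -E [RHS]mulrC divfK // mulrC.
  by rewrite /a mulrC.
rewrite /= F1 F2 F3 F4 !Joff_R !Jdiag_R.
have h1 : (i.+1%:R : R) != 0 by rewrite pnatr_eq0.
have h2 : (j.+1%:R : R) != 0 by rewrite pnatr_eq0.
have h3 : (i.+2%:R - j%:R : R) != 0 by rewrite subr_eq0 eqr_nat; apply/eqP; lia.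
rewrite -!natr1 in h1 h2 h3 *.
field.
by rewrite h1 h2 h3.
Qed.

Lemma ratr_id (x : rat) : ratr x = x.
Proof. by rewrite /ratr divq_num_den. Qed.

Definition Lm N : 'M[rat]_N := \matrix_(i < N, j < N) ('C(i, j))%:R.
Definition Km N : 'M[rat]_N :=
  Tri N (fun k => N%:R ^+ 2 - 1 - (Jdiag N k)%:~R) (fun k => (Joff N k)%:~R).
Definition Dm N : 'M[rat]_N := diag_mx (\row_(i < N) (-1) ^+ i).
Definition Sm N : 'M[rat]_N := Lm N *m Dm N.
Definition c0 N : rat := N%:R ^+ 2 - 1.

Lemma E1 N : Jmat rat N *m Lm N = Lm N *m Km N.
Proof.
apply/matrixP => i j.
rewrite (Jmul_row _ _ (g := fun l => ('C(l, j))%:R)) => [|l]; last by rewrite mxE.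
rewrite mxE (eq_bigr (fun l : 'I_N => ('C(i, l))%:R * Km N l j)) => [|l _]; last by rewrite mxE.
by rewrite /Km (@tri_col _ N _ (fun k => (Joff N k)%:~R) (Joff0 _ _) (JoffN _ _) (fun l => ('C(i, l))%:R)) BI.
Qed.

Definition G (i j : nat) : rat := \sum_(0 <= l < i.+1) (-1) ^+ l * ('C(i, l))%:R * ('C(l, j))%:R.

Lemma G_ext i j : \sum_(0 <= l < i.+2) (-1) ^+ l * ('C(i, l))%:R * ('C(l, j))%:R = G i j.
Proof. by rewrite big_nat_recr //= bin_small // mulr0 mul0r addr0. Qed.

Lemma G_eq i j : G i j = (-1) ^+ j * (i == j)%:R.
Proof.
elim: i j => [|i IH] j.
  rewrite /G big_nat1 expr0 bin0 !mul1r bin0n.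
  by case: j => [|j] /=; rewrite ?expr0 ?mulr1 ?mulr0.
rewrite /G big_nat_recl //= expr0 bin0 !mul1r.
under eq_bigr => l _ do rewrite binS natrD exprS mulN1r mulrDr mulrDl !mulNr.
rewrite big_split /= !sumrN.
have HA : \sum_(0 <= l < i.+1) (-1) ^+ l * ('C(i, l.+1))%:R * ('C(l.+1, j))%:R = ('C(0, j))%:R - G i j.
  have := G_ext i j; rewrite big_nat_recl //= expr0 bin0 !mul1r.
  under eq_bigr => l _ do rewrite exprS mulN1r !mulNr.
  rewrite sumrN => <-; ring.
rewrite HA.
case: j HA => [|j] HA.
  have -> : \sum_(0 <= l < i.+1) (-1) ^+ l * ('C(i, l))%:R * ('C(l.+1, 0))%:R = G i 0.
    by apply: eq_bigr => l _; rewrite !bin0.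
  rewrite /= mulr0; ring.
have -> : \sum_(0 <= l < i.+1) (-1) ^+ l * ('C(i, l))%:R * ('C(l.+1, j.+1))%:R = G i j.+1 + G i j.
  by rewrite /G -big_split /=; apply: eq_bigr => l _; rewrite binS natrD mulrDr.
rewrite bin0n /= !IH exprS eqSS; ring.
Qed.

Lemma widen_sum (f : nat -> rat) N i : (i < N)%N -> (forall l, (i < l)%N -> f l = 0) ->
  \sum_(l < N) f l = \sum_(0 <= l < i.+1) f l.
Proof.
move=> hi hf; rewrite -(big_mkord xpredT f) (@big_cat_nat _ _ _ i.+1) //=.
rewrite [X in _ + X = _]big_nat_cond [X in _ + X = _]big1 ?addr0 // => l /andP[/andP[h1 _] _].
exact: hf.
Qed.

Lemma SS N : Sm N *m Sm N = 1%:M.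
Proof.
apply/matrixP => i j.
rewrite !mxE (eq_bigr (fun l : 'I_N => (-1) ^+ j * ((-1) ^+ l * ('C(i, l))%:R * ('C(l, j))%:R))); last first.
  by move=> l _; rewrite /Sm !mul_mx_diag !mxE; ring.
rewrite -mulr_sumr (widen_sum (f := fun l => (-1) ^+ l * ('C(i, l))%:R * ('C(l, j))%:R) (ltn_ord i)); last first.
  by move=> l hl; rewrite bin_small // mulr0 mul0r.
rewrite -/(G i j) G_eq mulrA -exprD -signr_odd oddD addbb expr0 mul1r.
by [].
Qed.

Lemma vand j k : 'C(j + k, j) = \sum_(0 <= m < j.+1) 'C(j, m) * 'C(k, m).
Proof.
rewrite -(binomial.Vandermonde j k j) big_rev_mkord subn0.
apply: eq_bigr => m _.
have hm : (m <= j)%N by have := ltn_ord m; lia.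
rewrite subSS bin_sub //; congr (_ * _); congr 'C(_, _); lia.
Qed.

Lemma TLL N : Tmat rat N = Lm N *m (Lm N)^T.
Proof.
apply/matrixP => j k; rewrite !mxE vand natr_sum.
rewrite (eq_bigr (fun m : 'I_N => ('C(j, m) * 'C(k, m))%:R)) => [|m _]; last by rewrite !mxE natrM.
rewrite (widen_sum (f := fun m => ('C(j, m) * 'C(k, m))%:R) (ltn_ord j)) // => l hl.
by rewrite bin_small.
Qed.

Lemma DD N : Dm N *m Dm N = 1%:M.
Proof.
apply/matrixP => i j; rewrite /Dm mul_diag_mx !mxE.
case: eqP => [->|]; rewrite ?mulr0 ?mulr1n //.
by rewrite -exprD -signr_odd oddD addbb expr0.
Qed.

Lemma Dtr N : (Dm N)^T = Dm N.
Proof. by rewrite /Dm tr_diag_mx. Qed.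

Lemma Jtr N : (Jmat rat N)^T = Jmat rat N.
Proof. by apply/matrixP => i j; rewrite mxE !JTri Tri_sym. Qed.

Lemma Ktr N : (Km N)^T = Km N.
Proof. by apply/matrixP => i j; rewrite mxE /Km Tri_sym. Qed.

Lemma KD N : Km N *m Dm N = Dm N *m ((c0 N)%:M - Jmat rat N).
Proof.
apply/matrixP => i j; rewrite /Dm mul_diag_mx mul_mx_diag !mxE /c0.
have -> : (i == j) = ((i:nat) == j) by [].
move: (nat_of_ord i) (nat_of_ord j) => a b.
by repeat (case: eqP => ? /=); subst; rewrite ?mulr1n ?mulr0n ?exprS; try lia; ring.
Qed.

Lemma JS N : Jmat rat N *m Sm N = Sm N *m ((c0 N)%:M - Jmat rat N).
Proof. by rewrite /Sm [LHS]mulmxA E1 -[LHS]mulmxA KD mulmxA. Qed.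

Lemma LtJ N : (Lm N)^T *m Jmat rat N = Km N *m (Lm N)^T.
Proof. by have := congr1 trmx (E1 N); rewrite !trmx_mul Jtr Ktr. Qed.

Lemma TJ N : Tmat rat N *m Jmat rat N = Jmat rat N *m Tmat rat N.
Proof. by rewrite TLL -mulmxA LtJ mulmxA -E1 mulmxA. Qed.

Lemma LDL N : Lm N *m Dm N *m Lm N = Dm N.
Proof.
have := congr1 (fun M => M *m Dm N) (SS N).
by rewrite /= mul1mx /Sm !mulmxA -[_ *m Dm N *m Dm N]mulmxA DD mulmx1.
Qed.

Lemma LtDLt N : (Lm N)^T *m Dm N *m (Lm N)^T = Dm N.
Proof. by have := congr1 trmx (LDL N); rewrite !trmx_mul Dtr mulmxA. Qed.

Lemma TST N : Tmat rat N *m Sm N *m Tmat rat N = Sm N.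
Proof.
rewrite TLL /Sm.
have -> : Lm N *m (Lm N)^T *m (Lm N *m Dm N) *m (Lm N *m (Lm N)^T)
  = Lm N *m ((Lm N)^T *m (Lm N *m Dm N *m Lm N) *m (Lm N)^T) by rewrite !mulmxA.
by rewrite LDL LtDLt.
Qed.

Lemma eig_vvec N (u : 'cV[rat]_N) : Jmat rat N *m u = lamN rat N *: u -> u = nf u 0 *: vvec N.
Proof.
move=> hu; apply/matrixP => i j; rewrite (ord1 j) !mxE -nfE (uniq_eig hu) ?ltn_ord //.
by rewrite ratr_id.
Qed.

Lemma sqsum_ge0 n (x : 'cV[rat]_n) : 0 <= (x^T *m x) 0 0.
Proof. by rewrite mxE sumr_ge0 // => i _; rewrite mxE -expr2 sqr_ge0. Qed.

Lemma main_rat N (hN : (3 <= N)%N) (hodd : odd N) :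
  [/\ vvec N != 0, Jmat rat N *m vvec N = lamN rat N *: vvec N & Tmat rat N *m vvec N = vvec N].
Proof.
set J := Jmat rat N; set lam := lamN rat N; set v := vvec N.
have N0 : (0 < N)%N by lia.
pose i0 : 'I_N := Ordinal N0.
have hv0 : v i0 0 = 1 by rewrite mxE.
have vnz : v != 0.
  by apply/eqP => h; move: hv0; rewrite h mxE => /eqP; rewrite eq_sym oner_eq0.
have hc0 : c0 N = lam + lam by rewrite /c0 /lam /lamN; field.
have HM : (J - lam%:M) *m Sm N = Sm N *m (lam%:M - J).
  rewrite mulmxBl JS mulmxBr mul_scalar_mx !mul_mx_scalar hc0 scalerDl.
  by rewrite mulmxBr addrAC addrK mul_mx_scalar.
have hS : \det (Sm N) != 0.
  have := congr1 determinant (SS N); rewrite det_mulmx det1 => E.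
  by apply/eqP => h; move: E; rewrite h mul0r => /eqP; rewrite eq_sym oner_eq0.
have Hdet : \det (J - lam%:M) = 0.
  have := congr1 determinant HM; rewrite (det_mulmx (J - lam%:M) (Sm N)) (det_mulmx (Sm N)).
  have -> : lam%:M - J = (-1) *: (J - lam%:M) by rewrite scaleN1r opprB.
  rewrite detZ -signr_odd hodd expr1 => E.
  have : (\det (J - lam%:M) + \det (J - lam%:M)) * \det (Sm N) = 0.
    by rewrite mulrDl {1}E; ring.
  move/eqP; rewrite mulf_eq0 (negbTE hS) orbF => /eqP h; lra.
have [r rnz hr] : exists2 r : 'rV[rat]_N, r != 0 & r *m (J - lam%:M) = 0 by apply/det0P/eqP.
pose w := r^T.
have hw : J *m w = lam *: w.
  have := congr1 trmx hr; rewrite trmx_mul raddfB /= Jtr tr_scalar_mx trmx0 mulmxBl mul_scalar_mx.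
  by move/eqP; rewrite subr_eq0 => /eqP.
have wE := eig_vvec hw.
have w0 : nf w 0 != 0.
  apply/eqP => h; move: rnz; rewrite -trmx_eq0 -/w wE h scale0r eqxx //.
have hJv : J *m v = lam *: v.
  have := hw; rewrite wE -scalemxAr scalerA mulrC -scalerA => /(congr1 (fun M => (nf w 0)^-1 *: M)).
  by rewrite !scalerA mulrA mulVf // mul1r scale1r; apply.
have hTv : J *m (Tmat rat N *m v) = lam *: (Tmat rat N *m v).
  by rewrite mulmxA -TJ -mulmxA hJv -scalemxAr.
have TvE := eig_vvec hTv; rewrite -/v in TvE; set c := nf _ 0 in TvE.
have hSv : J *m (Sm N *m v) = lam *: (Sm N *m v).
  rewrite mulmxA JS -mulmxA mulmxBl mul_scalar_mx hJv -scalerBl -scalemxAr hc0 addrK.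
  by [].
have SvE := eig_vvec hSv; rewrite -/v in SvE; set s := nf (Sm N *m v) 0 in SvE.
have hs : s * s = 1.
  have E : Sm N *m (Sm N *m v) = v by rewrite mulmxA SS mul1mx.
  rewrite SvE -scalemxAr SvE scalerA in E.
  by have := congr1 (fun M : 'cV[rat]_N => M i0 0) E; rewrite /= mxE hv0 mulr1.
have hc2 : c * c = 1.
  have E : Tmat rat N *m Sm N *m Tmat rat N *m v = Sm N *m v by rewrite TST.
  rewrite -mulmxA TvE -scalemxAr -mulmxA SvE -scalemxAr TvE !scalerA in E.
  have := congr1 (fun M : 'cV[rat]_N => M i0 0) E; rewrite /= !mxE /= vseq0 !mulr1 => E2.
  have s0 : s != 0 by apply/eqP => h; move: hs; rewrite h mul0r => /eqP; rewrite eq_sym oner_eq0.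
  apply: (mulfI s0); rewrite mulr1 -[in RHS]E2; ring.
have hcpos : 0 <= c.
  have Q : (v^T *m (Tmat rat N *m v)) 0 0 = (((Lm N)^T *m v)^T *m ((Lm N)^T *m v)) 0 0.
    by rewrite TLL trmx_mul trmxK !mulmxA.
  rewrite TvE -scalemxAr mxE in Q.
  have P : 0 < (v^T *m v) 0 0.
    rewrite mxE (bigD1 i0) //= !mxE /= vseq0 mul1r.
    apply: (lt_le_trans ltr01); rewrite lerDl sumr_ge0 // => i _.
    by rewrite !mxE -expr2 sqr_ge0.
  have := sqsum_ge0 ((Lm N)^T *m v); rewrite -Q.
  by rewrite pmulr_lge0.
have c1 : c = 1 by nra.
by split => //; rewrite TvE c1 scale1r.
Qed.

End Aux.
Import Aux.

Theorem mainTheorem13 (N : nat) (hN : (3 <= N)%N) (hodd : odd N) :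
  [/\ vvec N != 0,
      Jmat rat N *m vvec N = lamN rat N *: vvec N,
      Tmat rat N *m vvec N = vvec N
    & forall (R : numFieldType) (w : 'cV[R]_N),
        w != 0 -> Jmat R N *m w = lamN R N *: w ->
        exists c : R, w = c *: map_mx (fun q : rat => ratr q) (vvec N)].
Proof.
have [h1 h2 h3] := main_rat hN hodd.
split=> // R w _ hw.
exists (nf w 0); apply/matrixP => i j.
rewrite (ord1 j) !mxE -nfE.
exact: (uniq_eig hw (ltn_ord i)).
Qed.
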